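(* Let $k\in\mathbb{Z}$. For every $n\in\mathbb{N}=\{1,2,\dots\}$, $$E_{n-1}^{(k)}(x)=\frac{1}{n}\sum_{j=1}^{n}\sum_{m=1}^{j}\binom{n}{j}\frac{S_{1}(j,m)}{m^{k-1}}E_{n-j}(x).$$
   Context: Euler polynomials $E_n(x)$ are defined by $\frac{2}{e^t+1}e^{xt}=\sum_{n=0}^{\infty}E_n(x)\frac{t^n}{n!}$. For $k\in\mathbb{Z}$, $\mathrm{Ei}_k(x)=\sum_{n=1}^{\infty}\frac{x^n}{n^k(n-1)!}$; the poly-Genocchi polynomials $G_n^{(k)}(x)$ are defined by $\frac{2\,\mathrm{Ei}_k(\log(1+t))}{e^t+1}e^{xt}=\sum_{n=0}^{\infty}G_n^{(k)}(x)\frac{t^n}{n!}$, and the poly-Euler polynomials are $E_n^{(k)}(x)=\frac{G_{n+1}^{(k)}(x)}{n+1}$ ($n\ge0$). $S_1(n,m)$ are the signed Stirling numbers of the first kind: $\frac{(\log(1+t))^m}{m!}=\sum_{n=m}^{\infty}S_1(n,m)\frac{t^n}{n!}$. *)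

(* Defs.v *)
(* Formal power series in t over a numFieldType R are
   represented by their coefficient sequences  nat -> R. *)
From HB Require Import structures.
From mathcomp Require Import all_boot all_order all_algebra.
Set Implicit Arguments. Unset Strict Implicit. Unset Printing Implicit Defensive.
Import Order.TTheory GRing.Theory Num.Theory.
Local Open Scope ring_scope.

Section Series.
Variable R : numFieldType.

Definition series := nat -> R.

Definition sone : series := fun n => if n == 0%N then 1 else 0.
Definition smul (f g : series) : series :=
  fun n => \sum_(i < n.+1) f i * g (n - i)%N.
Definition sadd (f g : series) : series := fun n => f n + g n.
Definition sscale (c : R) (f : series) : series := fun n => c * f n.
Definition spow (f : series) (m : nat) : series := iter m (smul f) sone.

(* multiplicative inverse of a series (f 0 <> 0): list of coefficients 0..n *)
Fixpoint sinv_seq (f : series) (n : nat) : seq R :=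
  match n with
  | 0%N => [:: (f 0%N)^-1]
  | n'.+1 => let s := sinv_seq f n' in
      rcons s (- (f 0%N)^-1 * \sum_(i < n'.+1) f i.+1 * nth 0 s (n' - i)%N)
  end.
Definition sinv (f : series) : series := fun n => nth 0 (sinv_seq f n) n.

(* composition a(g(t)) for g with g 0 = 0 *)
Definition scomp (a g : series) : series :=
  fun N => \sum_(n < N.+1) a n * spow g n N.

Definition sexp (x : R) : series := fun n => x ^+ n / (n`!)%:R.
Definition slog1p : series :=
  fun n => if n == 0%N then 0 else (-1) ^+ n.-1 / n%:R.
Definition sEi (k : int) : series :=
  fun n => if n == 0%N then 0 else ((n%:R ^ k) * (n.-1`!)%:R)^-1.

Definition s2_over_et1 : series := sscale 2 (sinv (sadd (sexp 1) sone)).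

Definition Euler (n : nat) (x : R) : R :=
  (n`!)%:R * smul s2_over_et1 (sexp x) n.

Definition polyGenocchi (k : int) (n : nat) (x : R) : R :=
  (n`!)%:R * smul (smul (scomp (sEi k) slog1p) s2_over_et1) (sexp x) n.

Definition polyEuler (k : int) (n : nat) (x : R) : R :=
  polyGenocchi k n.+1 x / (n.+1)%:R.

Definition S1 (n m : nat) : R := (n`!)%:R / (m`!)%:R * spow slog1p m n.

End Series.

(* Main.v *)
Require Import Defs.
From HB Require Import structures.
From mathcomp Require Import all_boot all_order all_algebra.
From mathcomp Require Import ring.
Import Order.TTheory GRing.Theory Num.Theory.
Local Open Scope ring_scope.

Lemma smul_polyE (R : numFieldType) (f g : series R) (p q : {poly R}) n :
  (forall i, (i <= n)%N -> p`_i = f i) -> (forall i, (i <= n)%N -> q`_i = g i) ->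
  (p * q)`_n = smul f g n.
Proof.
move=> hp hq; rewrite coefM /smul; apply: eq_bigr => i _.
by rewrite hp ?hq // ?leq_subr // -ltnS.
Qed.

Lemma smulA (R : numFieldType) (f g h : series R) n :
  smul (smul f g) h n = smul f (smul g h) n.
Proof.
pose P (u : series R) := \poly_(i < n.+1) u i.
have hP u i : (i <= n)%N -> (P u)`_i = u i by move=> hi; rewrite coef_poly ltnS hi.
rewrite -(@smul_polyE _ _ _ (P f * P g) (P h)); last by move=> i hi; rewrite hP.
  rewrite -(@smul_polyE _ _ _ (P f) (P g * P h)) ?mulrA //.
    by move=> i hi; rewrite hP.
  move=> i hi; apply: smul_polyE => j hj; rewrite hP //; exact: leq_trans hi.
move=> i hi; apply: smul_polyE => j hj; rewrite hP //; exact: leq_trans hi.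
Qed.

Theorem theorem3 (R : numFieldType) (k : int) (n : nat) (x : R) :
  (1 <= n)%N ->
  polyEuler k n.-1 x =
    (n%:R)^-1 * \sum_(1 <= j < n.+1) \sum_(1 <= m < j.+1)
      'C(n, j)%:R * S1 R j m / (m%:R ^ (k - 1)) * Euler (n - j) x.
Proof.
case: n => [//|n] _ /=.
rewrite /polyEuler /polyGenocchi smulA mulrC; congr (_ * _).
rewrite /smul mulr_sumr big_ord_recl /= {1}/scomp big_ord_recl big_ord0 /= {1}/sEi /= mul0r addr0 mul0r mulr0 add0r.
rewrite [RHS]big_add1 big_mkord /=.
apply: eq_bigr => [[j hj]] _ /=.
rewrite /bump /= add1n.
have hjn : (j.+1 <= n.+1)%N by [].
have sEi0 : sEi R k 0 = 0 by [].
rewrite -(bin_fact hjn) /scomp /Euler /smul.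
set B := \sum_(i < _) _ * sexp x _.
rewrite big_ord_recl sEi0 mul0r add0r mulr_suml mulr_sumr big_add1 big_mkord.
apply: eq_bigr => [[m hm]] _.
rewrite /S1 /=.
have -> : sEi R k (bump 0 m) = ((m.+1%:R ^ k) * (m`!)%:R)^-1 by [].
set S := smul _ _ _.
have m0 : (m.+1%:R : R) != 0 by rewrite pnatr_eq0.
have -> : (m.+1%:R : R) ^ k = m.+1%:R ^ (k - 1) * m.+1%:R.
  by rewrite -[in LHS](subrK 1 k) expfzDr // expr1z.
have e0 : (m.+1%:R : R) ^ (k - 1) != 0 by rewrite expfz_eq0 negb_and m0 orbT.
have f0 : ((m`!)%:R : R) != 0 by rewrite pnatr_eq0 -lt0n fact_gt0.
rewrite factS !natrM.
field.
by rewrite e0 f0 /= addrC natr1.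

Qed.
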